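(* Let $\Bbbk$ be a field of characteristic zero, $n,r$ positive integers, $\varepsilon\in\{0,1/2\}$, $d=n-2\varepsilon$, and assume $d>r+1$. Regard $\mathbf V^{\otimes r}$ as a $\Bbbk W_d$-module via $\Phi_{n,r+\varepsilon}$. Then the set of partitions $\lambda\vdash d$ with $[\mathbf V^{\otimes r}:S^\lambda]\neq0$ is contained in $\{\lambda\vdash d\mid\lambda\trianglerighteq(d-r,1^r)\}$. Hence $\ker\Phi_{n,r+\varepsilon}$ contains an isomorphic copy of $\bigoplus_{\lambda\vdash d,\ \lambda\not\trianglerighteq(d-r,1^r)}\operatorname{End}_\Bbbk(S^\lambda)$.
   Context: $\mathbf V$ is a free $\Bbbk$-module with basis $\mathbf v_1,\dots,\mathbf v_n$. $W_n$ is the symmetric group on $\{1,\dots,n\}$ acting on $\mathbf V^{\otimes r}$ by $w(\mathbf v_{j_1}\otimes\cdots\otimes\mathbf v_{j_r})=\mathbf v_{w(j_1)}\otimes\cdots\otimes\mathbf v_{w(j_r)}$, giving $\Phi_{n,r}:\Bbbk W_n\to\operatorname{End}_\Bbbk(\mathbf V^{\otimes r})$; $W_{n-1}=\{w:w(n)=n\}$ acts on $\mathbf V^{\otimes r}\otimes\mathbf v_n\subset\mathbf V^{\otimes(r+1)}$, identified with $\mathbf V^{\otimes r}$, giving $\Phi_{n,r+1/2}:\Bbbk W_{n-1}\to\operatorname{End}_\Bbbk(\mathbf V^{\otimes r})$. $S^\lambda$ is the (irreducible) Specht module of $W_d$ indexed by $\lambda$, $[M:S]$ the composition multiplicity, and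 $\Bbbk W_d\cong\bigoplus_{\mu\vdash d}\operatorname{End}_\Bbbk(S^\mu)$ the Wedderburn decomposition. $\trianglerighteq$ is the dominance order. *)

(* Defs.v *)
From HB Require Import structures.
From mathcomp Require Import all_boot all_algebra all_fingroup.
From mathcomp Require Import mxrepresentation.
Set Implicit Arguments. Unset Strict Implicit. Unset Printing Implicit Defensive.
Import GRing.Theory.
Local Open Scope ring_scope.

(* (MathComp matrices act on row vectors from the right.)                   *)
Section PermRep.
Variables (F : fieldType) (gT : finGroupType) (X : finType).
Variable to : X -> gT -> X.
Hypothesis to1 : forall x, to x 1%g = x.
Hypothesis toM : forall x g h, to x (g * h)%g = to (to x g) h.

Definition basvec (x : X) : 'rV[F]_#|X| := \row_k (enum_val k == x)%:R.

Definition permrep_mx (g : gT) : 'M[F]_#|X| :=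
  \matrix_(i, j) (to (enum_val i) g == enum_val j)%:R.

Lemma permrep_mx_repr : mx_repr [set: gT] permrep_mx.
Proof.
split.
  apply/matrixP=> i j; rewrite !mxE to1 (inj_eq enum_val_inj).
  by case: eqP.
move=> x y _ _; apply/matrixP=> i k; rewrite !mxE.
rewrite (bigD1 (enum_rank (to (enum_val i) x))) //= !mxE enum_rankK eqxx mul1r.
rewrite big1 ?addr0 ?toM // => j /negbTE nj; rewrite !mxE.
have -> : (to (enum_val i) x == enum_val j) = false.
  by apply/negbTE/eqP=> e; move: nj; rewrite e enum_valK eqxx.
by rewrite mul0r.
Qed.

Definition permrep := MxRepresentation permrep_mx_repr.
End PermRep.

Definition is_partition (d : nat) (la : seq nat) : bool :=
  [&& sorted geq la, all (fun x => 0 < x)%N la & sumn la == d].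

Definition dominates (la mu : seq nat) : Prop :=
  forall k : nat, (sumn (take k mu) <= sumn (take k la))%N.

Definition hook (d r : nat) : seq nat := (d - r)%N :: nseq r 1%N.

(* Tabloids of shape la are encoded as functions 'I_d -> 'I_d.+1 mapping an  *)
(* entry to the index of its row.  The permutation module on all such       *)
(* functions contains M^la (the span of tabloids of shape la).              *)
(* The canonical tableau t_la has entries 0..d-1 filled row by row; the     *)
(* tableau s.t_la (for s : 'S_d) has entry s j in the cell of j.             *)
Section Specht.
Variables (F : fieldType) (d : nat).

Definition tabloid_set := {ffun 'I_d -> 'I_d.+1}.

(* left action  s . {t} = {s t}, written as a right action of 'S_d *)
Definition tab_act (f : tabloid_set) (s : 'S_d) : tabloid_set :=
  [ffun x => f (s^-1 x)%g].

Lemma tab_act1 f : tab_act f 1%g = f.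
Proof. by apply/ffunP=> x; rewrite !ffunE invg1 perm1. Qed.

Lemma tab_actM f g h : tab_act f (g * h)%g = tab_act (tab_act f g) h.
Proof. by apply/ffunP=> x; rewrite !ffunE invMg permM. Qed.

Definition tabloid_repr := permrep F tab_act1 tab_actM.

(* row and column (0-based) of entry j in the canonical tableau of shape la *)
Definition rowof (la : seq nat) (j : nat) : nat :=
  count (fun i => sumn (take i.+1 la) <= j)%N (iota 0 (size la)).
Definition colof (la : seq nat) (j : nat) : nat :=
  (j - sumn (take (rowof la j) la))%N.

(* the tabloid {s . t_la} *)
Definition tabloid_of (la : seq nat) (s : 'S_d) : tabloid_set :=
  [ffun x => inord (rowof la (s^-1 x)%g)].

Definition colstab (la : seq nat) : {set 'S_d} :=
  [set t : 'S_d | [forall x : 'I_d, colof la (t x) == colof la x]].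

Definition polytabloid (la : seq nat) : 'rV[F]_#|tabloid_set| :=
  \sum_(t in colstab la) (-1) ^+ odd_perm t *: basvec F (tabloid_of la t).

(* The Specht module S^la: the submodule of the permutation module spanned
   by the polytabloids, i.e. generated by the polytabloid e_(t_la). *)
Definition Specht_mx (la : seq nat) := cyclic_mx tabloid_repr (polytabloid la).

Definition Specht_module (la : seq nat) : mxmodule tabloid_repr (Specht_mx la) :=
  cyclic_mx_module tabloid_repr (polytabloid la).

Definition Specht (la : seq nat) := submod_repr (Specht_module la).
End Specht.

(* The representation Phi_{n, r + eps} on V^{(x) r}, V = k^n, eps = 0 or 1/2 *)
(* (encoded as a boolean: eps = false for 0, eps = true for 1/2), of         *)
(* W_d = 'S_d with d = n - 2 eps.  For eps = 1/2, W_(n-1) is identified with *)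
(* the permutations of {1..n} fixing n, i.e. 'S_(n-1) acting on 'I_n by      *)
(* fixing the last point.  The basis of V^{(x) r} is indexed by functions    *)
(* j : 'I_r -> 'I_n, and w (v_(j_1) (x) ... (x) v_(j_r)) = v_(w j_1) (x) ... *)
Section Tensor.
Variables (F : fieldType) (n r : nat) (eps : bool).

Local Notation d := (n - eps)%N.

Definition ext_perm (g : 'S_d) (i : 'I_n) : 'I_n :=
  if insub (val i) is Some i' then widen_ord (leq_subr eps n) (g i') else i.

Lemma ext_perm1 i : ext_perm 1%g i = i.
Proof.
rewrite /ext_perm; case: insubP => [i' _ Hi|_] //.
by rewrite perm1; apply: val_inj; rewrite /= Hi.
Qed.

Lemma ext_permM g h i : ext_perm (g * h)%g i = ext_perm h (ext_perm g i).
Proof.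
rewrite /ext_perm; case: insubP => [i' _ _|/negbTE Hi].
  rewrite insubT ?ltn_ord //= => Hlt; rewrite permM; congr widen_ord.
  by congr (h _); apply: val_inj.
by rewrite insubF.
Qed.

Definition tensor_index := {ffun 'I_r -> 'I_n}.

Definition tensor_act (f : tensor_index) (g : 'S_d) : tensor_index :=
  [ffun k => ext_perm g (f k)].

Lemma tensor_act1 f : tensor_act f 1%g = f.
Proof. by apply/ffunP=> k; rewrite !ffunE ext_perm1. Qed.

Lemma tensor_actM f g h : tensor_act f (g * h)%g = tensor_act (tensor_act f g) h.
Proof. by apply/ffunP=> k; rewrite !ffunE ext_permM. Qed.

Definition Phi := permrep F tensor_act1 tensor_actM.
End Tensor.

(* [M : S] <> 0 : S is similar to a composition factor of M, i.e. to one of *)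
(* the factors of a composition series of the full module M.                *)
Definition comp_mult_nz (F : fieldType) (gT : finGroupType) (G : {group gT})
    (m : nat) (rM : mx_representation F G m)
    (k : nat) (rS : mx_representation F G k) : Prop :=
  exists (Us : seq 'M[F]_m) (cUs : mx_composition_series rM Us),
    (1%:M <= last 0 Us)%MS /\
    exists2 i : nat, (i < size Us)%N & mx_rsim (series_repr i cUs) rS.

(* Main.v *)
Require Import Defs.
From HB Require Import structures.
From mathcomp Require Import all_boot all_algebra all_fingroup.
From mathcomp Require Import mxrepresentation.
Set Implicit Arguments. Unset Strict Implicit. Unset Printing Implicit Defensive.
Import GRing.Theory.


Lemma rowof_cons a l j : rowof (a :: l) j =
  if (a <= j)%N then (rowof l (j - a)).+1 else 0%N.
Proof.
rewrite /rowof /= take0 addn0 -[1%N]addn0 iotaDl count_map.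
case: leqP => h.
  rewrite add1n; congr _.+1; apply: eq_count => i /=.
  by rewrite add1n -leq_subRL.
rewrite add0n (@eq_count _ _ pred0) ?count_pred0 // => i /=.
by apply/negbTE; rewrite -ltnNge (leq_trans h) // leq_addr.
Qed.

Lemma colof_cons a l j : colof (a :: l) j =
  if (a <= j)%N then colof l (j - a) else j.
Proof.
rewrite /colof rowof_cons; case: leqP => h //=.
  by rewrite subnDA.
by rewrite subn0.
Qed.

Lemma colof_lt la j : sorted geq la -> (j < sumn la)%N -> (colof la j < head 0%N la)%N.
Proof.
elim: la j => [|a l IH] j //= srt hj.
rewrite colof_cons; case: (leqP a j) => h //.
have sl := path_sorted srt.
move: srt hj IH sl; case: l => [|b l] /= srt hj IH sl.
  by move: hj; rewrite addn0 ltnNge h.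
case/andP: srt => ba _.
apply: leq_trans (IH (j - a)%N sl _) ba.
by rewrite ltn_subLR.
Qed.

From mathcomp Require Import zify.

Lemma sumn_take_nseq1 k r : sumn (take k (nseq r 1%N)) = minn k r.
Proof.
elim: r k => [|r IH] [|k] //=; try lia.
by rewrite IH; lia.
Qed.

Lemma sumn_take_pos l k : all (fun x => 0 < x)%N l -> (minn (sumn l) k <= sumn (take k l))%N.
Proof.
elim: l k => [|b l IH] [|k] //= /andP[hb hl].
have := IH k hl; lia.
Qed.

Lemma dom_hook d r la : is_partition d la -> (r < d)%N -> (d - r <= head 0%N la)%N ->
  dominates la (hook d r).
Proof.
case/and3P=> _ pos /eqP sd rd; move: pos sd; case: la => [|a l] /=.
  by move=> _ sd; rewrite -sd in rd.
case/andP=> ha hl sd hd [|k] //=.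
rewrite sumn_take_nseq1; have := sumn_take_pos k hl; lia.
Qed.

Section GenRep.
Local Open Scope ring_scope.
Variables (F : fieldType) (gT : finGroupType) (G : {group gT}).

Lemma gring_op_sumE (A : 'M[F]_#|G|) : (A \in group_ring F G)%MS ->
  exists a : gT -> F, forall m (rG : mx_representation F G m),
    gring_op rG A = \sum_(x in G) a x *: rG x.
Proof.
case/envelop_mxP=> a ->; exists a => m rG; rewrite linear_sum.
by apply: eq_bigr => x Gx; rewrite linearZ /= gring_opG.
Qed.

Lemma rsim_op0 m1 m2 (r1 : mx_representation F G m1) (r2 : mx_representation F G m2) A :
  mx_rsim r1 r2 -> (A \in group_ring F G)%MS -> gring_op r2 A = 0 -> gring_op r1 A = 0.
Proof.
case/mx_rsim_def=> B [B' _ hB] /gring_op_sumE[a ha].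
rewrite !ha => h2.
rewrite (eq_bigr (fun x => B *m (a x *: r2 x) *m B')); last first.
  by move=> x Gx; rewrite hB // -scalemxAr -scalemxAl.
by rewrite -(mulmx_suml B') -(mulmx_sumr B) h2 mulmx0 mul0mx.
Qed.

Lemma submod_op0 m (rG : mx_representation F G m) U (modU : mxmodule rG U) A :
  (A \in group_ring F G)%MS -> gring_op rG A = 0 -> gring_op (submod_repr modU) A = 0.
Proof.
case/gring_op_sumE=> a ha; rewrite !ha => h.
rewrite (eq_bigr (fun x => val_submod 1%:M *m (a x *: rG x) *m in_submod U 1%:M)).
  by rewrite -(mulmx_suml (in_submod U 1%:M)) -(mulmx_sumr (val_submod 1%:M)) h mulmx0 mul0mx.
move=> x Gx /=; rewrite /submod_mx in_submodE -scalemxAr -scalemxAl.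
by [].
Qed.

Lemma factmod_op0 m (rG : mx_representation F G m) U (modU : mxmodule rG U) A :
  (A \in group_ring F G)%MS -> gring_op rG A = 0 -> gring_op (factmod_repr modU) A = 0.
Proof.
case/gring_op_sumE=> a ha; rewrite !ha => h.
rewrite (eq_bigr (fun x => val_factmod 1%:M *m (a x *: rG x) *m in_factmod U 1%:M)).
  by rewrite -(mulmx_suml (in_factmod U 1%:M)) -(mulmx_sumr (val_factmod 1%:M)) h mulmx0 mul0mx.
move=> x Gx /=; rewrite /factmod_mx in_factmodE -scalemxAr -scalemxAl.
by [].
Qed.

Lemma series_op0 m (rG : mx_representation F G m) Us (cU : mx_composition_series rG Us) k A :
  (A \in group_ring F G)%MS -> gring_op rG A = 0 -> gring_op (series_repr k cU) A = 0.
Proof.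
move=> RA h; rewrite /series_repr /subseries_repr /section_repr.
by apply: submod_op0 => //; apply: factmod_op0.
Qed.

End GenRep.

Section PermRepLemmas.
Local Open Scope ring_scope.
Variables (F : fieldType) (gT : finGroupType) (X : finType).
Variable to : X -> gT -> X.
Hypothesis to1 : forall x, to x 1%g = x.
Hypothesis toM : forall x g h, to x (g * h)%g = to (to x g) h.

Lemma basvecJ x g : basvec F x *m permrep F to1 toM g = basvec F (to x g).
Proof.
apply/rowP=> j; rewrite !mxE (bigD1 (enum_rank x)) //= !mxE enum_rankK eqxx mul1r.
rewrite big1 ?addr0; first by rewrite eq_sym.
move=> k nk; rewrite !mxE; case: eqP => [e|]; last by rewrite mul0r.
by case/eqP: nk; rewrite -e enum_valK.
Qed.
End PermRepLemmas.

Section SpechtKill.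
Local Open Scope ring_scope.
Variables (F : fieldType) (d : nat).
Hypothesis charF0 : [pchar F]%R =i pred0.
Local Notation rho := (tabloid_repr F d).

Lemma tabloid_ofM (la : seq nat) (t s : 'S_d) : tab_act (tabloid_of la t) s = tabloid_of la (t * s)%g.
Proof. by apply/ffunP=> x; rewrite !ffunE invMg permM. Qed.

Lemma colstab_mulr (la : seq nat) (t s : 'S_d) : s \in colstab d la ->
  ((t * s^-1)%g \in colstab d la) = (t \in colstab d la).
Proof.
rewrite !inE => /forallP hs.
have hV y : colof la (s^-1 y)%g = colof la y.
  by have /eqP := hs (s^-1 y)%g; rewrite permKV => ->.
by apply: eq_forallb => x; rewrite permM hV.
Qed.

Lemma polytabJ (la : seq nat) (s : 'S_d) : s \in colstab d la -> odd_perm s ->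
  polytabloid F d la *m rho s = - polytabloid F d la.
Proof.
move=> cs os; rewrite /polytabloid mulmx_suml -sumrN.
rewrite (eq_bigr (fun t => (-1) ^+ odd_perm t *: basvec F (tabloid_of la (t * s)%g))); last first.
  by move=> t _; rewrite -scalemxAl basvecJ tabloid_ofM.
rewrite (reindex_inj (mulIg (s^-1)%g)) /=.
apply: eq_big => [t|t ct]; first by rewrite colstab_mulr.
rewrite mulgKV odd_permM odd_permV os signr_addb /= expr1 mulrN1.
by rewrite scaleNr.
Qed.

Lemma kill_poly (la : seq nat) (H : {set 'S_d}) (s : 'S_d) :
  s \in colstab d la -> odd_perm s -> (forall h, ((s * h)%g \in H) = (h \in H)) ->
  polytabloid F d la *m (\sum_(h in H) rho h) = 0.
Proof.
move=> cs os Hs.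
have eS : rho s *m (\sum_(h in H) rho h) = \sum_(h in H) rho h.
  rewrite mulmx_sumr [RHS](reindex_inj (mulgI s)) /=.
  apply: eq_big => [h|h _]; first by rewrite Hs.
  by symmetry; exact: (repr_mxM rho (in_setT s) (in_setT h)).
set S := \sum_(h in H) _ in eS *.
have : polytabloid F d la *m S = - (polytabloid F d la *m S).
  by rewrite -{1}eS mulmxA polytabJ // mulNmx.
move/eqP; rewrite -subr_eq0 opprK -mulr2n -scaler_nat scaler_eq0.
have /pcharf0P h2 := charF0; rewrite h2 /= => /eqP //.
Qed.
End SpechtKill.

Section TensorStab.
Variables (n r : nat) (eps : bool).
Local Notation d := (n - eps)%N.

Definition Stab (f : tensor_index n r) : {set 'S_d} :=
  [set g : 'S_d | tensor_act f g == f].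

Lemma tensor_act_eq (y f : tensor_index n r) (x : 'S_d) :
  (tensor_act y x == f) = (y == tensor_act f x^-1).
Proof.
apply/eqP/eqP => [<-|->]; last by rewrite -tensor_actM mulVg tensor_act1.
by rewrite -tensor_actM mulgV tensor_act1.
Qed.

Lemma Stab_conj (f : tensor_index n r) (x h : 'S_d) :
  ((x^-1 * h * x)%g \in Stab f) = (h \in Stab (tensor_act f x^-1)).
Proof.
by rewrite !inE !tensor_actM tensor_act_eq.
Qed.

Lemma exists_tau (la : seq nat) (f : tensor_index n r) :
  is_partition d la -> (head 0%N la + r < d)%N ->
  exists s : 'S_d, [/\ s \in colstab d la, odd_perm s & s \in Stab f].
Proof.
move=> pla hlt.
pose w := widen_ord (leq_subr eps n).
pose Om := [set a : 'I_d | w a \notin codom f].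
have cC : (#|~: Om| <= r)%N.
  have -> : #|~: Om| = #|w @: ~: Om| by rewrite card_imset // => a b /(congr1 val) /= /val_inj.
  apply: (@leq_trans #|[set y | y \in codom f]|).
    apply: subset_leq_card; apply/subsetP => y /imsetP[a]; rewrite !inE negbK => ha ->.
    by [].
  rewrite cardsE (leq_trans (card_size _)) // size_codom card_ord //.
have cO : (d - r <= #|Om|)%N.
  by have := cardsC Om; rewrite card_ord; lia.
case/and3P: pla => srt pos /eqP sd.
have hpos : (0 < head 0%N la)%N.
  destruct la as [|a l]; first by move: sd hlt => /= <-; lia.
  by case/andP: pos.
have hcol := colof_lt srt.
move: hpos hlt hcol; case hh: (head 0%N la) => [//|h'] _ hlt hcol.
pose c (a : 'I_d) : 'I_h'.+1 := inord (colof la a).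
have hc (a : 'I_d) : colof la a = c a.
  by rewrite /c inordK // hcol // sd.
have : ~~ (#|c @: Om| == #|Om|).
  apply: contraTN isT => /eqP e.
  have := max_card (mem (c @: Om)); rewrite card_ord e; lia.
case: (boolP [exists a in Om, exists b in Om, (a != b) && (c a == c b)]); last first.
  move=> nex /imset_injP[] a b ha hb e; apply/eqP; apply: contraNT nex => ne.
  by apply/existsP; exists a; rewrite ha /=; apply/existsP; exists b; rewrite hb ne e eqxx.
case/exists_inP=> a ha /exists_inP[b hb /andP[nab /eqP cab]] _.
exists (tperm a b); split.
- rewrite inE; apply/forallP => x; rewrite !hc; case: tpermP => [->|->|] //.
  by rewrite cab.
  by rewrite cab.
- by rewrite odd_tperm.
rewrite inE; apply/eqP/ffunP => k; rewrite ffunE /ext_perm.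
case: insubP => [i' _ Hi|] //.
have wi : w i' = f k by apply: val_inj; rewrite /= Hi.
have ci : w i' \in codom f by rewrite wi codom_f.
rewrite tpermD; first by apply: val_inj.
  by apply: contraTneq ci => <-; move: ha; rewrite inE.
by apply: contraTneq ci => <-; move: hb; rewrite inE.
Qed.

End TensorStab.

Section Kill.
Local Open Scope ring_scope.
Variables (F : fieldType) (n r : nat) (eps : bool).
Hypothesis charF0 : [pchar F]%R =i pred0.
Local Notation d := (n - eps)%N.
Local Notation G := [set: 'S_d].

Lemma conj_sum m (rG : mx_representation F G m) (f : tensor_index n r) (x : 'S_d) :
  rG x *m (\sum_(h in Stab eps f) rG h) =
  (\sum_(h in Stab eps (tensor_act f x^-1)) rG h) *m rG x.
Proof.
have inj : injective (fun h : 'S_d => (x^-1 * h * x)%g).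
  by move=> a b /mulIg /mulgI.
rewrite mulmx_sumr mulmx_suml (reindex_inj inj) /=.
apply: eq_big => [h|h _]; first by rewrite Stab_conj.
by rewrite -!(repr_mxM rG) ?inE // !mulgA mulgV mul1g.
Qed.

Definition Bf (f : tensor_index n r) : 'M[F]_#|G| :=
  \sum_(h in Stab eps f) regular_repr F G h.

Lemma Bf_mem f : (Bf f \in group_ring F G)%MS.
Proof.
rewrite /Bf linear_sum /=; apply: summx_sub => h _.
by apply: envelop_mx_id; rewrite inE.
Qed.

Lemma gring_op_Bf m (rG : mx_representation F G m) f :
  gring_op rG (Bf f) = \sum_(h in Stab eps f) rG h.
Proof.
rewrite /Bf linear_sum; apply: eq_bigr => h _; exact: (gring_opG rG (in_setT h)).
Qed.

Lemma specht_vec_kill (la : seq nat) (f : tensor_index n r) (v : 'rV[F]_#|tabloid_set d|) :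
  is_partition d la -> (head 0%N la + r < d)%N ->
  (v <= Specht_mx F d la)%MS ->
  v *m (\sum_(h in Stab eps f) tabloid_repr F d h) = 0.
Proof.
move=> pla hlt /cyclic_mxP[A /envelop_mxP[a ->] ->].
rewrite -mulmxA (mulmx_suml (\sum_(h in Stab eps f) tabloid_repr F d h)).
rewrite mulmx_sumr big1 // => x _.
rewrite -scalemxAl -scalemxAr conj_sum mulmxA.
have [s [cs os ss]] := @exists_tau n r eps la (tensor_act f x^-1) pla hlt.
rewrite (kill_poly charF0 cs os) ?mul0mx ?scaler0 //.
move=> h; move: ss; rewrite !inE tensor_actM => /eqP ->; by [].
Qed.

Lemma specht_op_kill (la : seq nat) (f : tensor_index n r) :
  is_partition d la -> (head 0%N la + r < d)%N ->
  gring_op (Specht F d la) (Bf f) = 0.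
Proof.
move=> pla hlt; rewrite gring_op_Bf.
rewrite (eq_bigr (fun h => val_submod 1%:M *m tabloid_repr F d h *m in_submod (Specht_mx F d la) 1%:M)); last first.
  by move=> h _; rewrite /= /submod_mx in_submodE.
rewrite -(mulmx_suml (in_submod _ 1%:M)) -(mulmx_sumr (val_submod 1%:M)).
suff -> : @val_submod F _ (Specht_mx F d la) _ 1%:M *m (\sum_(h in Stab eps f) tabloid_repr F d h) = 0 by rewrite mul0mx.
apply/row_matrixP => i; rewrite row_mul row0.
apply: (specht_vec_kill f pla hlt).
apply: (submx_trans (row_sub i _)); exact: val_submodP.
Qed.

End Kill.

Section Core.
Local Open Scope ring_scope.
Variables (F : fieldType) (n r : nat) (eps : bool).
Hypothesis charF0 : [pchar F]%R =i pred0.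
Local Notation d := (n - eps)%N.
Local Notation G := [set: 'S_d].

Lemma F'G : pgroup.pgroup ([pchar F]%R)^' G.
Proof. by apply/pgroup.pgroupP => p _ _; rewrite inE /= charF0. Qed.

Lemma natr_neq0 k : (0 < k)%N -> (k%:R : F) != 0.
Proof. by have /pcharf0P -> := charF0; rewrite -lt0n. Qed.

Lemma core (sG : irrType F G) (i : sG) :
  (forall f : tensor_index n r, gring_op (irr_repr i) (Bf F eps f) = 0) ->
  forall A, (A \in Wedderburn_subring i)%MS -> gring_op (Phi F n r eps) A = 0.
Proof.
move=> hK A RA.
have RGA : (A \in group_ring F G)%MS by move: RA; rewrite genmxE mem_sub_gring => /andP[].
apply/row_matrixP => k; rewrite row0 rowE.
set f := enum_val k.
have -> : delta_mx 0 k = basvec F f.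
  apply/rowP => j; rewrite !mxE (inj_eq enum_val_inj) /=; by [].
have BA0 : Bf F eps f *m A = 0.
  have irrI := socle_irr i.
  have mem : (Bf F eps f *m A \in Wedderburn_subring i)%MS.
    case/andP: (Wedderburn_ideal i) => lid _; apply: submx_trans lid.
    exact: mem_mulsmx (Bf_mem F eps f) RA.
  have mem0 : (0 \in Wedderburn_subring i)%MS by rewrite linear0 sub0mx.
  have := @regular_op_inj_pchar _ _ _ sG F'G _ (irr_repr i) irrI.
  rewrite irr_reprK_pchar; last exact: F'G.
  move=> inj; apply: inj; rewrite ?inE //.
  by rewrite gring_opM // hK mul0mx linear0.
have hS : (0 < #|Stab eps f|)%N.
  by apply/card_gt0P; exists 1%g; rewrite inE tensor_act1.
have fixB : basvec F f *m gring_op (Phi F n r eps) (Bf F eps f) = #|Stab eps f|%:R *: basvec F f.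
  rewrite gring_op_Bf mulmx_sumr (eq_bigr (fun _ => basvec F f)).
    by rewrite sumr_const scaler_nat.
  move=> h; rewrite inE => /eqP hf.
  by rewrite basvecJ hf.
have -> : basvec F f = (#|Stab eps f|%:R)^-1 *: (basvec F f *m gring_op (Phi F n r eps) (Bf F eps f)).
  by rewrite fixB scalerA mulVf ?scale1r // natr_neq0.
by rewrite -scalemxAl -mulmxA -gring_opM // BA0 linear0 mulmx0 scaler0.
Qed.

End Core.

Theorem proposition5p2 (F : fieldType) (charF0 : [pchar F]%R =i pred0)
    (n r : nat) (eps : bool) :
    (0 < n)%N -> (0 < r)%N -> (r.+1 < n - eps)%N ->
  (* the Specht modules occurring as composition factors of V^{(x) r} *)
  (forall la : seq nat, is_partition (n - eps) la ->
     comp_mult_nz (Phi F n r eps) (Specht F (n - eps) la) ->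
     dominates la (hook (n - eps) r))
  /\
  (* hence the Wedderburn components End(S^la), la not |>= (d-r,1^r), of
     k W_d lie in the kernel of Phi_{n, r + eps} *)
  (forall (sG : irrType F [set: 'S_(n - eps)]) (i : sG) (la : seq nat),
     is_partition (n - eps) la ->
     mx_rsim (irr_repr i) (Specht F (n - eps) la) ->
     ~ dominates la (hook (n - eps) r) ->
     forall A, (A \in Wedderburn_subring i)%MS ->
       gring_op (Phi F n r eps) A = 0%R).
Proof.
move=> n0 r0 hrd.
have hlt la : is_partition (n - eps) la -> ~ dominates la (hook (n - eps) r) ->
    (head 0%N la + r < n - eps)%N.
  move=> pla nd; case: (leqP (n - eps - r) (head 0%N la)) => h; last lia.
  by case: nd; apply: dom_hook => //; lia.
split; last first.
  move=> sG i la pla rs nd A RA.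
  apply: (core charF0) RA => f.
  exact: (rsim_op0 rs (Bf_mem F eps f) (specht_op_kill charF0 f pla (hlt la pla nd))).
move=> la pla [Us [cU [_ [k kUs rs]]]].
case: (leqP (n - eps - r) (head 0%N la)) => hh.
  by apply: dom_hook => //; lia.
have hl : (head 0%N la + r < n - eps)%N by lia.
exfalso; suff: false by [].
apply: (socle_exists (regular_repr F [set: 'S_(n - eps)]) false) => sG.
have FG := @F'G F n eps charF0.
have irrS := mx_series_repr_irr cU kUs.
set i := irr_comp sG (series_repr k cU).
have rs1 := rsim_irr_comp_pchar sG FG irrS.
have rsI : mx_rsim (irr_repr i) (Specht F (n - eps) la).
  exact: mx_rsim_trans (mx_rsim_sym rs1) rs.
have hK (f : tensor_index n r) : gring_op (irr_repr i) (Bf F eps f) = 0%R.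
  exact: (rsim_op0 rsI (Bf_mem F eps f) (specht_op_kill charF0 f pla hl)).
have Rei := Wedderburn_id_mem i.
have RGe : (Wedderburn_id i \in group_ring F [set: 'S_(n - eps)])%MS.
  by move: Rei; rewrite genmxE mem_sub_gring => /andP[].
have h0 := core charF0 hK Rei.
have h1 := series_op0 cU k RGe h0.
have h2 := rsim_op0 (mx_rsim_sym rs1) RGe h1.
move: h2; rewrite op_Wedderburn_id_pchar // => /eqP.
by rewrite -mxrank_eq0 mxrank1 eqn0Ngt irr_degree_gt0.
Qed.
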